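(* For integers $d\geq 2$ and $1\leq k\leq d$, $\gamma_{gr}^{L,k}(Q_d)\geq\lceil 2^d-2^{d-(k+1)}\rceil$.
   Context: $Q_d$ is the $d$-dimensional hypercube: vertices are the $0$-$1$ strings of length $d$, adjacent iff they differ in exactly one position. For a vertex $v$, $N(v)$ is its open neighborhood and $N[v]=N(v)\cup\{v\}$. A sequence $S=(v_1,\ldots,v_m)$ of distinct vertices is a $k$-$L$-sequence if for each $i$ there is $u_i\in N[v_i]$ such that the number of indices $j<i$ with $u_i\in N(v_j)$ is less than $k$. $\gamma_{gr}^{L,k}(G)$ is the maximum length of a $k$-$L$-sequence of $G$. *)

(* Defs.v *)
From mathcomp Require Import all_boot all_order all_algebra.
Set Implicit Arguments. Unset Strict Implicit. Unset Printing Implicit Defensive.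
Import Order.TTheory GRing.Theory Num.Theory.

Definition hvert (d : nat) := {ffun 'I_d -> bool}.

Definition hadj (d : nat) (u v : hvert d) : bool :=
  #|[set i : 'I_d | u i != v i]| == 1%N.

Definition hcadj (d : nat) (u v : hvert d) : bool := (u == v) || hadj u v.

(* S = (v_1,...,v_m) is a k-L-sequence: distinct vertices and for each i there is
   u_i in N[v_i] such that #{ j < i | u_i \in N(v_j) } < k. *)
Definition is_kL_seq (d k : nat) (s : seq (hvert d)) : bool :=
  uniq s &&
  [forall i : 'I_(size s),
     [exists u : hvert d,
        hcadj u (nth u s i) &&
        (count (fun w => hadj u w) (take i s) < k)%N]].

(* Main.v *)
Require Import Defs.
From mathcomp Require Import all_boot all_order all_algebra zify.
Import Order.TTheory GRing.Theory Num.Theory.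
Set Implicit Arguments. Unset Strict Implicit. Unset Printing Implicit Defensive.

Definition flip d (v : hvert d) (b : 'I_d) : hvert d :=
  [ffun i => if i == b then ~~ v i else v i].

Lemma flipE d (v : hvert d) b i : flip v b i = if i == b then ~~ v i else v i.
Proof. by rewrite ffunE. Qed.

Lemma flipK d (v : hvert d) b : flip (flip v b) b = v.
Proof. apply/ffunP=> i; rewrite !flipE; case: eqP => // ->; by rewrite negbK. Qed.

Lemma flip_diff d (v : hvert d) b : [set i | flip v b i != v i] = [set b].
Proof.
apply/setP=> i; rewrite !inE flipE; case: (i =P b) => [->|ne]; first by case: (v b).
by rewrite eqxx.
Qed.

Lemma hadj_flip d (v : hvert d) b : hadj (flip v b) v.
Proof. by rewrite /hadj flip_diff cards1. Qed.

Lemma hadjP d (u x : hvert d) : hadj u x -> exists b, x = flip u b.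
Proof.
rewrite /hadj => /cards1P [b Hb]; exists b; apply/ffunP => i.
rewrite flipE; have := congr1 (fun A : {set 'I_d} => i \in A) Hb => /=; rewrite !inE.
case: (i =P b) => [->|ne]; rewrite ?eqxx.
  by case: (u b); case: (x b).
idtac.
by case: (u i); case: (x i).
Qed.

Lemma count_bound d (u : hvert d) (t : seq (hvert d)) (B : {set 'I_d}) :
  uniq t -> (forall x, x \in t -> hadj u x -> exists2 b, b \in B & x = flip u b) ->
  count (hadj u) t <= #|B|.
Proof.
move=> Ut H; rewrite -size_filter cardE -(size_map (flip u)).
apply: uniq_leq_size; first exact: filter_uniq.
move=> x; rewrite mem_filter => /andP [hx xt].
have [b bB ->] := H x xt hx; apply: map_f; by rewrite mem_enum.
Qed.

Definition par d (c : 'I_d) (v : hvert d) : bool := odd (\sum_(i < d | i <= c) (v i : nat)).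
Definition Ktop d (c : 'I_d) (v : hvert d) : nat := \sum_(i < d | c < i) (v i : nat) * 2 ^ i.
Definition rank d (c : 'I_d) (v : hvert d) : nat := (Ktop c v).*2 + par c v.
Definition topb d (c : 'I_d) (v : hvert d) : bool := [forall i : 'I_d, (c < i) ==> v i].
Definition ex d (c : 'I_d) (v : hvert d) : bool := [&& 0 < c, topb c v, v c & par c v].

Lemma par_flip_lo d (c : 'I_d) (v : hvert d) (b : 'I_d) : b <= c -> par c (flip v b) = ~~ par c v.
Proof.
move=> hb; rewrite /par (bigD1 b) //= [X in _ = ~~ odd X](bigD1 b) //=.
rewrite flipE eqxx (eq_bigr (fun i => (v i : nat))); last first.
  by move=> i /andP [_ /negbTE ne]; rewrite flipE ne.
rewrite !oddD; by case: (v b) => /=; rewrite ?addTb ?addFb ?negbK.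
Qed.

Lemma par_flip_hi d (c : 'I_d) (v : hvert d) (b : 'I_d) : c < b -> par c (flip v b) = par c v.
Proof.
move=> hb; rewrite /par; congr odd; apply: eq_bigr => i hi.
rewrite flipE; case: eqP => // e; move: hi hb; rewrite e => h1 h2.
by move: (leq_ltn_trans h1 h2); rewrite ltnn.
Qed.

Lemma Ktop_flip_lo d (c : 'I_d) (v : hvert d) (b : 'I_d) : b <= c -> Ktop c (flip v b) = Ktop c v.
Proof.
move=> hb; rewrite /Ktop; apply: eq_bigr => i hi.
rewrite flipE; case: eqP => // e; move: hi hb; rewrite e => h1 h2.
by move: (leq_ltn_trans h2 h1); rewrite ltnn.
Qed.

Lemma Ktop_flip_hi d (c : 'I_d) (v : hvert d) (b : 'I_d) : c < b -> ~~ v b -> Ktop c (flip v b) = Ktop c v + 2 ^ b.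
Proof.
move=> hb vb; rewrite /Ktop (bigD1 b) //= [X in _ = X + _](bigD1 b) //=.
rewrite flipE eqxx (negbTE vb) /= (eq_bigr (fun i => (v i : nat) * 2 ^ i)); last first.
  by move=> i /andP [_ /negbTE ne]; rewrite flipE ne.
by rewrite mul1n mul0n add0n addnC.
Qed.

Lemma topb_flip_lo d (c : 'I_d) (v : hvert d) (b : 'I_d) : b <= c -> topb c (flip v b) = topb c v.
Proof.
move=> hb; rewrite /topb; apply: eq_forallb => i; rewrite flipE.
case: eqP => // e; rewrite e; case: (ltnP c b) => // h.
by move: (leq_ltn_trans hb h); rewrite ltnn.
Qed.

Definition seqS d (c : 'I_d) : seq (hvert d) :=
  sort (fun x y => rank c x <= rank c y) [seq v <- enum (hvert d) | ~~ ex c v].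

Definition fp d (c : 'I_d) (v : hvert d) : hvert d :=
  match [pick z : 'I_d | (c < z) && ~~ v z] with
  | Some z => flip v z
  | None => if par c v then flip v c else v
  end.

Lemma fp_adj d (c : 'I_d) (v : hvert d) : hcadj (fp c v) v.
Proof.
rewrite /fp /hcadj; case: pickP => [z _|_]; first by rewrite hadj_flip orbT.
case: (par c v); first by rewrite hadj_flip orbT.
by rewrite eqxx.
Qed.

Lemma key d (c : 'I_d) (v x : hvert d) :
  ~~ ex c x -> x != v -> rank c x <= rank c v -> ~~ ex c v -> hadj (fp c v) x ->
  exists2 b, b \in [set b : 'I_d | c < b] & x = flip (fp c v) b.
Proof.
move=> exx xv rxv exv /hadjP [b xb]; exists b => //; rewrite inE.
case: (ltnP c b) => // bc; exfalso.
move: xb; rewrite /fp; case: pickP => [z /andP [cz vz]|hnone].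
  move=> xe; move: rxv; rewrite xe /rank Ktop_flip_lo // Ktop_flip_hi //.
  have : 0 < 2 ^ z by rewrite expn_gt0.
  move: (2 ^ z) => t; case: (par _ _); case: (par _ _) => /=; lia.
have tv : topb c v.
  apply/forallP => i; apply/implyP => ci; have := hnone i; rewrite ci /=; by case: (v i).
case pv: (par c v) => xe.
  case: (b =P c) => [bc'|nbc].
    by move: xv; rewrite xe bc' flipK eqxx.
  have c0 : 0 < c.
    have : b < c by rewrite ltn_neqAle bc andbT; apply/eqP => /val_inj.
    by case: (nat_of_ord c).
  move: exv; rewrite /ex c0 tv pv /= andbT => vc.
  move: exx; rewrite /ex c0 xe topb_flip_lo // topb_flip_lo // tv /=.
  rewrite par_flip_lo // par_flip_lo // pv /= andbT flipE.
  have -> : (c == b) = false by apply/eqP => e; apply: nbc; rewrite e.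
  by rewrite flipE eqxx vc.
move: rxv; rewrite xe /rank Ktop_flip_lo // par_flip_lo // pv /=; lia.
Qed.

Lemma seqS_kL d k (c : 'I_d) : #|[set b : 'I_d | c < b]| < k -> is_kL_seq k (seqS c).
Proof.
move=> hk; set s := seqS c.
have Us : uniq s by rewrite sort_uniq filter_uniq // enum_uniq.
have exs : forall x, x \in s -> ~~ ex c x.
  by move=> x; rewrite mem_sort mem_filter => /andP [].
have Ss : sorted (fun x y => rank c x <= rank c y) s.
  by apply: sort_sorted => x y; exact: leq_total.
rewrite /is_kL_seq Us /=; apply/forallP => i; apply/existsP.
set v0 : hvert d := [ffun _ => false].
exists (fp c (nth v0 s i)).
rewrite (set_nth_default v0 _ (ltn_ord i)) fp_adj /=.
apply: leq_ltn_trans hk; apply: count_bound; first exact: take_uniq.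
move=> x xt; apply: key.
- by apply: exs; exact: mem_take xt.
- move: xt => /(nthP v0) [j]; rewrite size_take ltn_ord => ji <-.
  rewrite nth_take // nth_uniq //; last exact: ltn_trans ji (ltn_ord i).
  by rewrite neq_ltn ji.
- move: xt => /(nthP v0) [j]; rewrite size_take ltn_ord => ji <-.
  rewrite nth_take //.
  apply: (sorted_leq_nth (fun y x z => @leq_trans (rank c y) (rank c x) (rank c z)) (fun x => leqnn _) v0 Ss).
  + by rewrite inE; exact: ltn_trans ji (ltn_ord i).
  + by rewrite inE.
  + exact: ltnW.
- by apply: exs; exact: mem_nth.
Qed.

Lemma card_top d (c : 'I_d) : #|[set b : 'I_d | c < b]| <= d - c.+1.
Proof.
rewrite cardsCs card_ord; apply: leq_sub2l.
have hc : c.+1 <= d := ltn_ord c.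
have winj : injective (widen_ord hc) by move=> x y /(congr1 val) /= /val_inj.
rewrite -[X in X <= _]card_ord -(card_imset _ winj); apply: subset_leq_card.
apply/subsetP => _ /imsetP [j _ ->]; rewrite !inE -leqNgt /=.
by have := ltn_ord j.
Qed.

Lemma size_seqS d (c : 'I_d) : size (seqS c) = 2 ^ d - #|[set v : hvert d | ex c v]|.
Proof.
rewrite size_sort.
have -> : size [seq v <- enum (hvert d) | ~~ ex c v] = #|[pred v : hvert d | ~~ ex c v]|.
  rewrite cardE; apply: perm_size; apply: uniq_perm.
  - by rewrite filter_uniq // enum_uniq.
  - exact: enum_uniq.
  - by move=> v; rewrite mem_filter mem_enum !inE mem_enum andbT.
have h := cardC [pred v : hvert d | ex c v].
have e2 : #|hvert d| = 2 ^ d by rewrite /hvert card_ffun card_bool card_ord.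
have e3 : #|[set v : hvert d | ex c v]| = #|[pred v : hvert d | ex c v]|.
  by apply: eq_card => v; rewrite !inE.
rewrite e3; rewrite e2 in h.
have -> : #|[pred v : hvert d | ~~ ex c v]| = #|[predC [pred v : hvert d | ex c v]]|.
  by apply: eq_card => v; rewrite !inE.
by rewrite -h addKn.
Qed.

Definition sh d (c : 'I_d) (j : 'I_c.-1) : 'I_d := insubd c j.+1.

Lemma card_ex d (c : 'I_d) : #|[set v : hvert d | ex c v]| <= 2 ^ c.-1.
Proof.
pose f (v : hvert d) : {ffun 'I_c.-1 -> bool} := [ffun j => v (@sh _ c j)].
have finj : {in [set v : hvert d | ex c v] &, injective f}.
  move=> v w; rewrite !inE => /and4P [c0 tv vc pv] /and4P [_ tw wc pw] fe.
  have st1 : forall i : 'I_d, nat_of_ord i != 0 -> v i = w i.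
    move=> i i0; case: (ltnP c i) => ci.
      by move/forallP: tv => /(_ i); rewrite ci /= => ->; move/forallP: tw => /(_ i); rewrite ci /= => ->.
    case: (i =P c) => [->|nic]; first by rewrite vc wc.
    have ic : i < c by rewrite ltn_neqAle ci andbT; apply/eqP => e; apply: nic; exact: val_inj.
    have jp : i.-1 < c.-1 by move: i0 ic; case: (nat_of_ord i) => // n _; case: (nat_of_ord c) => //.
    have shi : @sh _ c (Ordinal jp) = i.
      apply: val_inj; rewrite /sh val_insubd /=.
      have -> : (i.-1).+1 = i by move: i0; case: (nat_of_ord i).
      by rewrite ltn_ord.
    by have := congr1 (fun g : {ffun 'I_c.-1 -> bool} => g (Ordinal jp)) fe; rewrite /f !ffunE shi.
  apply/ffunP => i; case: (eqVneq (nat_of_ord i) 0) => [i0|]; last by move=> h; exact: (st1 i h).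
  have ic : (i : 'I_d) <= c by rewrite i0.
  move: pv; rewrite /par (bigD1 (i : 'I_d)) //= => pv.
  move: pw; rewrite /par (bigD1 (i : 'I_d)) //= => pw.
  move: pv; rewrite (eq_bigr (fun j => (w j : nat))); last first.
    move=> j /andP [_ ji]; congr nat_of_bool; apply: st1; apply: contra ji => /eqP j0.
    by apply/eqP; apply: val_inj; rewrite /= j0 i0.
  move: pw; rewrite !oddD.
  case: (v i); case: (w i) => //=; rewrite ?addTb ?addFb => h1 h2; exfalso.
    apply: (negP h2); exact: h1.
  apply: (negP h1); exact: h2.
rewrite -(card_in_imset finj).
apply: leq_trans (max_card _) _.
by rewrite card_ffun card_bool card_ord.
Qed.

Local Open Scope ring_scope.

Theorem mainTheorem9 (d k : nat) (hd : (2 <= d)%N) (hk1 : (1 <= k)%N) (hkd : (k <= d)%N) :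
  exists s : seq (hvert d), is_kL_seq k s /\
    Num.ceil ((2 : rat) ^+ d - (2 : rat) ^ (d%:Z - (k%:Z + 1))) <= (size s)%:Z.
Proof.
have c_lt : (d - k < d)%N by lia.
pose c := Ordinal c_lt.
exists (seqS c); split.
  apply: seqS_kL; apply: leq_ltn_trans (card_top c) _ => /=; lia.
rewrite ceil_le_int size_seqS.
case: (ltnP k d) => hkd'.
  have hE : (#|[set v : hvert d | ex c v]| <= 2 ^ (d - k.+1))%N.
    have := card_ex c => /=; have -> : (d - k).-1 = (d - k.+1)%N by lia.
    done.
  have -> : (d%:Z - (k%:Z + 1)) = (d - k.+1)%N%:Z by lia.
  rewrite -exprnP.
  have h1 : (2 ^ (d - k.+1) <= 2 ^ d)%N by rewrite leq_pexp2l //; lia.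
  have h2 : (2 ^ d - 2 ^ (d - k.+1) <= 2 ^ d - #|[set v : hvert d | ex c v]|)%N.
    exact: leq_sub2l.
  apply: le_trans (_ : ((2 ^ d - 2 ^ (d - k.+1))%N)%:R <= _).
    by rewrite natrB // !natrX.
  by rewrite pmulrn ler_nat.
have hkd2 : k = d by apply/eqP; rewrite eqn_leq hkd hkd'.
have -> : #|[set v : hvert d | ex c v]| = 0%N.
  apply: eq_card0 => v; rewrite inE /ex /= hkd2 subnn //.
rewrite subn0 -[X in _ <= X]pmulrn natrX.
have : 0 <= (2 : rat) ^ (d%:Z - (k%:Z + 1)) by apply: exprz_ge0.
move: ((2 : rat) ^ (d%:Z - (k%:Z + 1))) => t ht.
by rewrite lerBlDr lerDl.
Qed.
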